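(* Let $G_1,G_2,H_1,H_2\in SL^+_{sym}(2)$ and let $g_i,h_i$ be the largest eigenvalues of $G_i,H_i$ ($i=1,2$). Then $$K^{min}\le\hat K:=\sqrt{g_1h_1g_2h_2}\le K:=\max\{g_1h_1,g_2h_2\}.$$ In particular $K^{min}<K$ whenever $g_1h_1\ne g_2h_2$.
   Context: $SL^+_{sym}(2)$: real symmetric positive definite $2\times2$ matrices with determinant $1$; $SL(2)$: real $2\times2$ matrices of determinant $1$; $\lambda_{\max}(M)$: largest eigenvalue of a symmetric $M$. For $G_1,G_2,H_1,H_2\in SL^+_{sym}(2)$ (the two phases of the two-phase fields $G=\chi_{E_1}G_1+\chi_{E_2}G_2$, $H=\chi_{E_1}H_1+\chi_{E_2}H_2$ with $E_1,E_2$ a measurable partition of $\Omega$ into sets of positive measure), define $$K^{min}:=\min_{A,B\in SL(2)}\ \max_{i=1,2}\ \lambda_{\max}(B^TG_iB)\,\lambda_{\max}(A^TH_iA).$$ *)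

(* Defs.v *)
From Stdlib Require Import Reals Lra.
Open Scope R_scope.

Record Mat2 := mkMat2 { m11 : R; m12 : R; m21 : R; m22 : R }.

Definition det2 (M : Mat2) : R := m11 M * m22 M - m12 M * m21 M.
Definition tr2 (M : Mat2) : R := m11 M + m22 M.
Definition transp (M : Mat2) : Mat2 := mkMat2 (m11 M) (m21 M) (m12 M) (m22 M).
Definition mul2 (M N : Mat2) : Mat2 :=
  mkMat2 (m11 M * m11 N + m12 M * m21 N) (m11 M * m12 N + m12 M * m22 N)
         (m21 M * m11 N + m22 M * m21 N) (m21 M * m12 N + m22 M * m22 N).

Definition qform (M : Mat2) (x y : R) : R :=
  x * (m11 M * x + m12 M * y) + y * (m21 M * x + m22 M * y).

Definition SL2 (A : Mat2) : Prop := det2 A = 1.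

Definition SLsym2 (M : Mat2) : Prop :=
  m12 M = m21 M /\
  (forall x y : R, (x <> 0 \/ y <> 0) -> 0 < qform M x y) /\
  det2 M = 1.

(* Largest eigenvalue of a (symmetric) 2x2 matrix: the larger root of the
   characteristic polynomial t^2 - tr(M) t + det(M). *)
Definition lam_max (M : Mat2) : R :=
  (tr2 M + sqrt (tr2 M * tr2 M - 4 * det2 M)) / 2.

Definition Kvals (G1 G2 H1 H2 : Mat2) (k : R) : Prop :=
  exists A B : Mat2, SL2 A /\ SL2 B /\
    k = Rmax (lam_max (mul2 (transp B) (mul2 G1 B)) * lam_max (mul2 (transp A) (mul2 H1 A)))
             (lam_max (mul2 (transp B) (mul2 G2 B)) * lam_max (mul2 (transp A) (mul2 H2 A))).

Definition is_glb (E : R -> Prop) (m : R) : Prop :=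
  (forall x, E x -> m <= x) /\ (forall b, (forall x, E x -> b <= x) -> b <= m).

(* Main.v *)
Require Import Defs.
From Stdlib Require Import Reals Lra Psatz.
Open Scope R_scope.

Lemma lam_le (M : Mat2) c : det2 M = 1 -> tr2 M <= c + /c -> 1 <= c -> lam_max M <= c.
Proof.
  intros Hd Ht Hc. unfold lam_max. rewrite Hd.
  set (t := tr2 M) in *. set (ic := /c) in *.
  assert (Hci : c * ic = 1) by (unfold ic; field; lra).
  assert (Hic : 0 < ic) by (unfold ic; apply Rinv_0_lt_compat; lra).
  destruct (Rle_lt_dec 0 t).
  - assert (sqrt (t*t - 4*1) <= c - ic).
    { rewrite <- (sqrt_square (c - ic)) by nra. apply sqrt_le_1_alt. nra. }
    lra.
  - assert (sqrt (t*t - 4*1) <= -t).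
    { rewrite <- (sqrt_square (- t)) by lra. apply sqrt_le_1_alt. nra. }
    lra.
Qed.

Lemma lam_nonneg (M : Mat2) : 0 <= tr2 M -> 0 <= lam_max M.
Proof. intros. unfold lam_max. pose proof (sqrt_pos (tr2 M * tr2 M - 4 * det2 M)). lra. Qed.

Lemma lam_props (M : Mat2) : SLsym2 M -> 1 <= lam_max M /\ lam_max M + / lam_max M = tr2 M.
Proof.
  destruct M as [a b b' c]. unfold SLsym2, lam_max, tr2, det2, qform; simpl. intro HH.
  destruct HH as [Hs [Hq Hd]]. subst b'.
  assert (Ha := Hq 1 0 (or_introl R1_neq_R0)).
  assert (Hc := Hq 0 1 (or_intror R1_neq_R0)).
  rewrite Hd. set (t := a + c).
  clear Hq. ring_simplify in Ha. ring_simplify in Hc.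
  assert (Ht : 2 <= t).
  { unfold t. pose proof (Rle_0_sqr (a-c)). pose proof (Rle_0_sqr b). unfold Rsqr in *.
    assert (4 <= (a+c)*(a+c)) by nra. nra. }
  assert (HD : 0 <= t*t - 4*1) by nra.
  pose proof (sqrt_sqrt _ HD) as Hss. pose proof (sqrt_pos (t*t-4*1)).
  set (s := sqrt (t*t-4*1)) in *.
  assert (Hl : 1 <= (t + s)/2) by lra. split; [exact Hl|].
  assert (/((t+s)/2) = (t-s)/2).
  { apply (Rmult_eq_reg_l ((t+s)/2)); [|lra]. rewrite Rinv_r by lra.
    replace ((t + s) / 2 * ((t - s) / 2)) with ((t*t - s*s)/4) by field. rewrite Hss. field. }
  rewrite H0. lra.
Qed.

Lemma TI a b c d e f p q : a*c - b*b = 1 -> d*f - e*e = 1 -> 0 <= a+c -> a+c <= p + /p ->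
  0 <= d+f -> d+f <= q + /q -> 1 <= p -> 1 <= q -> a*d + 2*b*e + c*f <= p*q + /(p*q).
Proof.
  intros H1 H2 H3 H4 H5 H6 Hp Hq.
  rewrite Rinv_mult. set (ip := /p) in *. set (iq := /q) in *.
  assert (Hpi : p * ip = 1) by (unfold ip; field; lra).
  assert (Hqi : q * iq = 1) by (unfold iq; field; lra).
  assert (0 < ip) by (unfold ip; apply Rinv_0_lt_compat; lra).
  assert (0 < iq) by (unfold iq; apply Rinv_0_lt_compat; lra).
  assert (ip <= 1) by nra. assert (iq <= 1) by nra.
  set (u := (a-c)*(a-c) + 4*b*b). set (v := (d-f)*(d-f)+4*e*e).
  set (w := (a-c)*(d-f) + 4*b*e).
  assert (Hu : u <= (p-ip)*(p-ip)).
  { assert (u = (a+c)*(a+c) - 4*(a*c-b*b)) by (unfold u; ring). rewrite H9, H1.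
    assert ((a+c)*(a+c) <= (p+ip)*(p+ip)) by (apply Rmult_le_compat; lra).
    assert ((p+ip)*(p+ip) - (p-ip)*(p-ip) = 4*(p*ip)) by ring. lra. }
  assert (Hv : v <= (q-iq)*(q-iq)).
  { assert (v = (d+f)*(d+f) - 4*(d*f-e*e)) by (unfold v; ring). rewrite H9, H2.
    assert ((d+f)*(d+f) <= (q+iq)*(q+iq)) by (apply Rmult_le_compat; lra).
    assert ((q+iq)*(q+iq) - (q-iq)*(q-iq) = 4*(q*iq)) by ring. lra. }
  assert (Hw : w*w <= u*v).
  { assert (u*v - w*w = ((a-c)*(2*e) - (2*b)*(d-f))^2) by (unfold u,v,w; ring).
    pose proof (pow2_ge_0 ((a-c)*(2*e) - (2*b)*(d-f))). lra. }
  assert (0 <= u) by (unfold u; pose proof (Rle_0_sqr (a-c)); pose proof (Rle_0_sqr b); unfold Rsqr in *; lra).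
  assert (0 <= v) by (unfold v; pose proof (Rle_0_sqr (d-f)); pose proof (Rle_0_sqr e); unfold Rsqr in *; lra).
  assert (w*w <= ((p-ip)*(q-iq))*((p-ip)*(q-iq))).
  { apply Rle_trans with (u*v); [exact Hw|]. apply Rle_trans with ((p-ip)*(p-ip)*v).
    apply Rmult_le_compat_r; lra. assert (0 <= (p-ip)*(p-ip)) by nra.
    replace (((p-ip)*(q-iq))*((p-ip)*(q-iq))) with ((p-ip)*(p-ip)*((q-iq)*(q-iq))) by ring.
    apply Rmult_le_compat_l; lra. }
  assert (w <= (p-ip)*(q-iq)).
  { assert (0 <= (p-ip)*(q-iq)) by nra. destruct (Rle_lt_dec w 0). lra. nra. }
  assert (2*(a*d + 2*b*e + c*f) = (a+c)*(d+f) + w) by (unfold w; ring).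
  assert ((a+c)*(d+f) <= (p+ip)*(q+iq)) by nra.
  assert ((p+ip)*(q+iq) + (p-ip)*(q-iq) = 2*(p*q + ip*iq)) by ring.
  lra.
Qed.

Lemma L0 (M : Mat2) x : SLsym2 M -> / lam_max M <= x <= 1 ->
  exists B, det2 B = 1 /\
    tr2 (mul2 (transp B) (mul2 M B)) = lam_max M * x + /(lam_max M * x) /\
    tr2 (mul2 B (transp B)) = x + /x.
Proof.
  intros HM Hx. destruct (lam_props M HM) as [Hm1 Hmt].
  set (m := lam_max M) in *.
  assert (Hm0 : 0 < m) by lra.
  assert (Hinv : 0 < /m) by (apply Rinv_0_lt_compat; lra).
  destruct HM as [Hs [_ Hd]].
  destruct M as [a b b' c]; simpl in *. subst b'.
  unfold tr2, det2 in *; simpl in *.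
  destruct (Req_dec x 1) as [Hx1|Hx1].
  - subst x. exists (mkMat2 1 0 0 1). simpl. repeat split; [ring| |field].
    transitivity (a+c); [ring | rewrite <- Hmt; field; lra].
  - assert (Hxl : x < 1) by lra.
    assert (Hmg : 1 < m).
    { destruct (Rle_lt_dec m 1) as [h|h]; [|exact h].
      assert (m = 1) by lra. assert (/m = 1) by (rewrite H; apply Rinv_1). lra. }
    assert (Hx0 : 0 < x) by lra.
    assert (Hmi : m * /m = 1) by (field; lra).
    assert (Hmm : m - /m <> 0) by (assert (/m < /1) by (apply Rinv_lt_contravar; lra); rewrite Rinv_1 in *; lra).
    set (r := sqrt x).
    assert (Hr0 : 0 < r) by (apply sqrt_lt_R0; lra).
    assert (Hrr : r * r = x) by (apply sqrt_sqrt; lra).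
    set (be := (r - /r)/(m - /m)).
    set (al := r - be * m).
    assert (E1 : al + be * m = r) by (unfold al; ring).
    assert (E2 : al + be * /m = /r) by (unfold al, be; field; repeat split; try lra; nra).
    assert (Hb : b*b - (a*c-1) = 0) by lra.
    exists (mkMat2 (al + be*a) (be*b) (be*b) (al + be*c)). simpl.
    repeat split.
    + transitivity (al*al + al*be*(a+c) + be*be*(a*c-b*b)). ring.
      rewrite Hd, <- Hmt. transitivity ((al + be*m)*(al+be*/m)). field; repeat split; try lra; nra.
      rewrite E1, E2. field; repeat split; try lra; nra.
    + transitivity (al*al*(a+c) + 2*al*be*((a+c)*(a+c)-2) + be*be*((a+c)*(a+c)*(a+c)-3*(a+c))).
      { apply Rminus_diag_uniq.
        transitivity ((b*b - (a*c-1))*(3*be*be*(a+c) + 4*al*be)); [ring|rewrite Hb; ring]. }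
      rewrite <- Hmt. transitivity (m*((al + be*m)*(al+be*m)) + /m*((al+be*/m)*(al+be*/m))).
      field; repeat split; try lra; nra. rewrite E1, E2. rewrite <- Hrr. field; repeat split; try lra; nra.
    + transitivity (2*al*al + 2*al*be*(a+c) + be*be*((a+c)*(a+c)-2)).
      { apply Rminus_diag_uniq.
        transitivity ((b*b - (a*c-1))*(2*be*be)); [ring|rewrite Hb; ring]. }
      rewrite <- Hmt. transitivity ((al + be*m)*(al+be*m) + (al+be*/m)*(al+be*/m)).
      field; repeat split; try lra; nra. rewrite E1, E2. rewrite <- Hrr. field; repeat split; try lra; nra.
Qed.

Lemma qform_nonneg (N : Mat2) x y : SLsym2 N -> 0 <= qform N x y.
Proof.
  intros [_ [Hq _]]. destruct (Req_dec x 0); destruct (Req_dec y 0).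
  - subst. unfold qform. lra.
  - left; apply Hq; auto.
  - left; apply Hq; auto.
  - left; apply Hq; auto.
Qed.

Lemma det_congr (M B : Mat2) : det2 (mul2 (transp B) (mul2 M B)) = det2 B * det2 B * det2 M.
Proof. destruct M, B; unfold det2; simpl; ring. Qed.

Lemma L (M N : Mat2) x : SLsym2 M -> SLsym2 N -> / lam_max M <= x <= 1 ->
  exists B, SL2 B /\
   0 <= lam_max (mul2 (transp B) (mul2 M B)) <= lam_max M * x /\
   0 <= lam_max (mul2 (transp B) (mul2 N B)) <= lam_max N / x.
Proof.
  intros HM HN Hx. destruct (L0 M x HM Hx) as [B [HdB [HtM HtX]]].
  destruct (lam_props M HM) as [Hm1 Hmt].
  destruct (lam_props N HN) as [Hn1 Hnt].
  set (m := lam_max M) in *. set (n := lam_max N) in *.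
  assert (Hinv : 0 < /m) by (apply Rinv_0_lt_compat; lra).
  assert (Hx0 : 0 < x) by lra.
  assert (Hmx : 1 <= m * x).
  { apply Rle_trans with (m * /m). right; field; lra. apply Rmult_le_compat_l; lra. }
  exists B. split; [exact HdB|]. split.
  - split.
    + apply lam_nonneg. rewrite HtM. assert (0 < /(m*x)) by (apply Rinv_0_lt_compat; lra). lra.
    + apply lam_le. rewrite det_congr, HdB. destruct HM as [_ [_ Hd]]. rewrite Hd; ring.
      rewrite HtM; lra. exact Hmx.
  - assert (Hpos : 0 <= tr2 (mul2 (transp B) (mul2 N B))).
    { replace (tr2 (mul2 (transp B) (mul2 N B))) with
        (qform N (m11 B) (m21 B) + qform N (m12 B) (m22 B))
        by (destruct N, B; unfold qform, tr2; simpl; ring).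
      pose proof (qform_nonneg N (m11 B) (m21 B) HN).
      pose proof (qform_nonneg N (m12 B) (m22 B) HN). lra. }
    split; [apply lam_nonneg; exact Hpos|].
    assert (Hix : 1 <= /x).
    { rewrite <- Rinv_1. apply Rinv_le_contravar; lra. }
    assert (Hc : 1 <= n / x) by (unfold Rdiv; nra).
    apply lam_le. rewrite det_congr, HdB. destruct HN as [_ [_ Hd]]. rewrite Hd; ring.
    2: exact Hc.
    destruct HN as [Hs [_ Hd]].
    unfold SL2, det2, tr2, mul2, transp in *.
    destruct B as [b1 b2 b3 b4]. destruct N as [d e e' f]. simpl in *. subst e'.
    pose proof (TI (b1*b1+b2*b2) (b1*b3+b2*b4) (b3*b3+b4*b4) d e f (/x) n) as T.
    assert (Hxx : / x + / / x = x + / x) by (rewrite Rinv_inv; ring).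
    assert (Hxp : 0 < /x) by (apply Rinv_0_lt_compat; lra).
    assert (Hnp : 0 < /n) by (apply Rinv_0_lt_compat; lra).
    specialize (T ltac:(transitivity ((b1*b4-b2*b3)*(b1*b4-b2*b3)); [ring| rewrite HdB; ring])
                 Hd ltac:(lra) ltac:(lra) ltac:(lra) ltac:(lra) Hix Hn1).
    replace (n / x) with (/x * n) by (unfold Rdiv; ring).
    eapply Rle_trans; [|exact T]. right. ring.
Qed.

Lemma core (G1 G2 H1 H2 : Mat2) x y :
  SLsym2 G1 -> SLsym2 G2 -> SLsym2 H1 -> SLsym2 H2 ->
  / lam_max G1 <= x <= 1 -> / lam_max H1 <= y <= 1 ->
  lam_max G1 * lam_max H1 * (x * y) = sqrt (lam_max G1 * lam_max H1 * lam_max G2 * lam_max H2) ->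
  exists k, Kvals G1 G2 H1 H2 k /\ k <= sqrt (lam_max G1 * lam_max H1 * lam_max G2 * lam_max H2).
Proof.
  intros HG1 HG2 HH1 HH2 Hx Hy Hz.
  destruct (L G1 G2 x HG1 HG2 Hx) as [B [HB [[b1 b1'] [b2 b2']]]].
  destruct (L H1 H2 y HH1 HH2 Hy) as [A [HA [[a1 a1'] [a2 a2']]]].
  destruct (lam_props G1 HG1) as [g1 _]. destruct (lam_props G2 HG2) as [g2 _].
  destruct (lam_props H1 HH1) as [h1 _]. destruct (lam_props H2 HH2) as [h2 _].
  set (S := sqrt _) in *.
  eexists. split. exists A, B. split; [exact HA|]. split; [exact HB|]. reflexivity.
  assert (Hx0 : 0 < x) by (pose proof (Rinv_0_lt_compat (lam_max G1) ltac:(lra)); lra).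
  assert (Hy0 : 0 < y) by (pose proof (Rinv_0_lt_compat (lam_max H1) ltac:(lra)); lra).
  assert (HSS : S * S = lam_max G1 * lam_max H1 * lam_max G2 * lam_max H2)
    by (unfold S; apply sqrt_sqrt; apply Rmult_le_pos; [apply Rmult_le_pos; [apply Rmult_le_pos|]|]; lra).
  apply Rmax_lub.
  - eapply Rle_trans. apply Rmult_le_compat; try eassumption.
    right. rewrite <- Hz. ring.
  - eapply Rle_trans. apply Rmult_le_compat; try eassumption.
    assert (0 < S) by (rewrite <- Hz; apply Rmult_lt_0_compat; [apply Rmult_lt_0_compat|apply Rmult_lt_0_compat]; lra).
    apply Rmult_le_reg_l with S; [lra|].
    right. unfold Rdiv. rewrite <- Hz at 1.
    transitivity (lam_max G1 * lam_max H1 * lam_max G2 * lam_max H2 * ((x*y) * /x * /y)).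
    ring. rewrite <- HSS. field. lra.
Qed.

Lemma ex_le (G1 G2 H1 H2 : Mat2) :
  SLsym2 G1 -> SLsym2 G2 -> SLsym2 H1 -> SLsym2 H2 ->
  lam_max G2 * lam_max H2 <= lam_max G1 * lam_max H1 ->
  exists k, Kvals G1 G2 H1 H2 k /\ k <= sqrt (lam_max G1 * lam_max H1 * lam_max G2 * lam_max H2).
Proof.
  intros HG1 HG2 HH1 HH2 Hle.
  destruct (lam_props G1 HG1) as [g1 _]. destruct (lam_props G2 HG2) as [g2 _].
  destruct (lam_props H1 HH1) as [h1 _]. destruct (lam_props H2 HH2) as [h2 _].
  set (a := lam_max G1) in *. set (b := lam_max H1) in *.
  set (c := lam_max G2) in *. set (d := lam_max H2) in *.
  assert (HP : 1 <= a*b*c*d).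
  { assert (1 <= a*b) by nra. assert (1 <= c*d) by nra. nra. }
  set (S := sqrt (a*b*c*d)).
  assert (HSS : S * S = a*b*c*d) by (apply sqrt_sqrt; lra).
  assert (HS1 : 1 <= S) by (rewrite <- sqrt_1; apply sqrt_le_1_alt; lra).
  assert (Hab : 1 <= a * b) by nra.
  assert (HSab : S <= a*b).
  { assert (S*S <= (a*b)*(a*b)) by (rewrite HSS; replace (a*b*c*d) with ((a*b)*(c*d)) by ring;
      apply Rmult_le_compat_l; lra). nra. }
  set (z := S / (a*b)).
  assert (Hz1 : z <= 1) by (unfold z; apply Rmult_le_reg_r with (a*b); [lra|];
     unfold Rdiv; rewrite Rmult_assoc, Rinv_l; lra).
  assert (Hzl : /(a*b) <= z) by (unfold z, Rdiv; rewrite <- (Rmult_1_l (/(a*b))) at 1; apply Rmult_le_compat_r;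
     [left; apply Rinv_0_lt_compat; lra | lra]).
  assert (Ha0 : 0 < /a) by (apply Rinv_0_lt_compat; lra).
  assert (Hb0 : 0 < /b) by (apply Rinv_0_lt_compat; lra).
  assert (Hai : a * /a = 1) by (field; lra).
  assert (Hbi : b * /b = 1) by (field; lra).
  assert (Hai1 : /a <= 1) by nra. assert (Hbi1 : /b <= 1) by nra.
  assert (Habi : /(a*b) = /a * /b) by (field; lra).
  assert (Hzab : a * b * z = S) by (unfold z; field; lra).
  destruct (Rle_lt_dec (/a) z) as [h|h].
  - apply (core G1 G2 H1 H2 z 1); auto; fold a b c d S; try lra.
  - apply (core G1 G2 H1 H2 (/a) (z*a)); auto; fold a b c d S; try lra.
    all: try (rewrite <- Hzab; field; lra).
    split.
      * rewrite Habi in Hzl. apply Rmult_le_reg_r with (/a); [lra|].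
        rewrite Rmult_assoc, Rinv_r by lra. lra.
      * apply Rle_trans with (/a * a); [apply Rmult_le_compat_r; lra| rewrite Rinv_l; lra].
Qed.

Theorem mainTheorem6 (G1 G2 H1 H2 : Mat2) :
  SLsym2 G1 -> SLsym2 G2 -> SLsym2 H1 -> SLsym2 H2 ->
  forall Kmin : R, is_glb (Kvals G1 G2 H1 H2) Kmin ->
  let g1 := lam_max G1 in let g2 := lam_max G2 in
  let h1 := lam_max H1 in let h2 := lam_max H2 in
  Kmin <= sqrt (g1 * h1 * g2 * h2) /\
  sqrt (g1 * h1 * g2 * h2) <= Rmax (g1 * h1) (g2 * h2) /\
  (g1 * h1 <> g2 * h2 -> Kmin < Rmax (g1 * h1) (g2 * h2)).
Proof.
  intros HG1 HG2 HH1 HH2 Kmin [Hlow _]. cbv zeta.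
  assert (Hk : exists k, Kvals G1 G2 H1 H2 k /\
      k <= sqrt (lam_max G1 * lam_max H1 * lam_max G2 * lam_max H2)).
  { destruct (Rle_dec (lam_max G2 * lam_max H2) (lam_max G1 * lam_max H1)) as [h|h].
    - apply ex_le; auto.
    - destruct (ex_le G2 G1 H2 H1) as [k [Hkv Hkle]]; auto; try lra.
      exists k. split.
      + destruct Hkv as [A [B [HA [HB Hk]]]]. exists A, B. split; [exact HA|]. split; [exact HB|].
        rewrite Hk. apply Rmax_comm.
      + replace (lam_max G1 * lam_max H1 * lam_max G2 * lam_max H2)
          with (lam_max G2 * lam_max H2 * lam_max G1 * lam_max H1) by ring. exact Hkle. }
  destruct Hk as [k [Hkv Hkle]]. pose proof (Hlow k Hkv) as Hkl.
  destruct (lam_props G1 HG1) as [g1 _]. destruct (lam_props G2 HG2) as [g2 _].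
  destruct (lam_props H1 HH1) as [h1 _]. destruct (lam_props H2 HH2) as [h2 _].
  revert Hkle.
  replace (lam_max G1 * lam_max H1 * lam_max G2 * lam_max H2) with
    ((lam_max G1 * lam_max H1) * (lam_max G2 * lam_max H2)) by ring.
  assert (1 <= lam_max G1 * lam_max H1) by nra.
  assert (1 <= lam_max G2 * lam_max H2) by nra.
  set (u := lam_max G1 * lam_max H1) in *. set (v := lam_max G2 * lam_max H2) in *.
  intro Hkle.
  assert (Hu := Rmax_l u v). assert (Hv := Rmax_r u v).
  set (M := Rmax u v) in *.
  assert (HM : sqrt (M * M) = M) by (apply sqrt_square; lra).
  assert (HS : sqrt (u*v) <= M).
  { rewrite <- HM. apply sqrt_le_1_alt. apply Rmult_le_compat; lra. }
  split; [lra|]. split; [exact HS|].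
  intro Hne.
  assert (sqrt (u*v) < M).
  { rewrite <- HM. apply sqrt_lt_1_alt. split. nra.
    unfold M, Rmax. destruct (Rle_dec u v). assert (u < v) by lra. nra. nra. }
  lra.
Qed.
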